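(* Let $X\in\mathbb{R}^{n\times p}$ have unit $\ell_2$-norm columns, let $\beta\in\mathbb{R}^p$ be $k$-sparse with support $\mathcal{S}$, let $\eta\in\mathbb{R}^n$ have independent $\mathcal{N}(0,\sigma^2)$ entries, and let $y=X\beta+\eta$. Suppose $X$ satisfies the $(k,b)$-screening condition for $\beta$ with parameter $b=b(n,p)\in(0,1/\sqrt{k})$, and assume $$\frac{\beta_{\min}}{\|\beta\|_2} > 2b + \frac{4\sqrt{\sigma^2\log p}}{\|\beta\|_2}.$$ Then, whenever the event $\mathcal{G}_\eta=\{\|X^\top\eta\|_\infty\le 2\sqrt{\sigma^2\log p}\}$ occurs, the output $\hat{\mathcal{S}}$ of Algorithm 1 satisfies $\mathcal{S}\subset\hat{\mathcal{S}}$ for every integer $d\le p$ with $$d \ge \left\lceil \frac{\sqrt{k}}{\frac{\beta_{\min}}{\|\beta\|_2} - 2b - \frac{4\sqrt{\sigma^2\log p}}{\|\beta\|_2}}\right\rceil .$$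
   Context: Notation: $[[p]]=\{1,\dots,p\}$; $n,p,k$ are positive integers with $p\ge 2$ and $k<n$. $X\in\mathbb{R}^{n\times p}$ has columns $X_1,\dots,X_p$, each with $\|X_j\|_2=1$. $\beta\in\mathbb{R}^p$ is $k$-sparse: its support $\mathcal{S}=\{i\in[[p]]:\beta_i\neq 0\}$ has exactly $k$ elements; $\mathcal{S}^c=[[p]]\setminus\mathcal{S}$; $\beta_{\min}=\min_{i\in\mathcal{S}}|\beta_i|$. Algorithm 1 (marginal correlation screening): given $X$, $y$ and an integer $d\in\{1,\dots,p\}$, compute $w=X^\top y$ and output a set $\hat{\mathcal{S}}\subset[[p]]$ with $|\hat{\mathcal{S}}|=d$ consisting of indices of the $d$ largest values of $|w_i|$, i.e. $|w_i|\ge |w_j|$ for all $i\in\hat{\mathcal{S}}$, $j\notin\hat{\mathcal{S}}$ (ties broken arbitrarily). $(k,b)$-screening condition: for a fixed $k$-sparse $\beta$ with support $\mathcal{S}$, the matrix $X$ (unit-norm columns) satisfies it if there is $b=b(n,p)$ with $0<b<1/\sqrt{k}$ such that (SC-1) $\max_{i\in\mathcal{S}}\big|\sum_{j\in\mathcal{S},\,j\neq i}X_i^\top X_j\beta_j\big|\le b\,\|\beta\|_2$, and (SC-2) $\max_{i\in\mathcal{S}^c}\big|\sum_{j\in\mathcal{S}}X_i^\top X_j\beta_j\big|\le b\,\|\beta\|_2$. *)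

(* Defs.v *)
From Stdlib Require Import Reals List ZArith.
Open Scope R_scope.

Fixpoint rsum (n : nat) (f : nat -> R) : R :=
  match n with O => 0 | S m => rsum m f + f m end.

Fixpoint supp_card (p : nat) (beta : nat -> R) : nat :=
  match p with
  | O => O
  | S m => (supp_card m beta + if Req_EM_T (beta m) 0 then 0 else 1)%nat
  end.

(* A matrix X in R^{n x p} is a function (row i, column j) -> X i j. *)
Definition inner (n : nat) (u v : nat -> R) : R := rsum n (fun i => u i * v i).
Definition col (X : nat -> nat -> R) (j : nat) : nat -> R := fun i => X i j.
Definition colip (n : nat) (X : nat -> nat -> R) (i j : nat) : R :=
  inner n (col X i) (col X j).
Definition norm2 (p : nat) (v : nat -> R) : R := sqrt (rsum p (fun j => v j ^ 2)).

Definition unit_columns (n p : nat) (X : nat -> nat -> R) : Prop :=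
  forall j, (j < p)%nat -> norm2 n (col X j) = 1.

Definition matvec (p : nat) (X : nat -> nat -> R) (beta : nat -> R) : nat -> R :=
  fun i => rsum p (fun j => X i j * beta j).
Definition tmatvec (n : nat) (X : nat -> nat -> R) (v : nat -> R) : nat -> R :=
  fun j => inner n (col X j) v.

Definition is_beta_min (p : nat) (beta : nat -> R) (bmin : R) : Prop :=
  (exists i, (i < p)%nat /\ beta i <> 0 /\ Rabs (beta i) = bmin) /\
  (forall i, (i < p)%nat -> beta i <> 0 -> bmin <= Rabs (beta i)).

Definition screening_condition (n p k : nat) (X : nat -> nat -> R)
    (beta : nat -> R) (b : R) : Prop :=
  0 < b /\ b < 1 / sqrt (INR k) /\
  (forall i, (i < p)%nat -> beta i <> 0 ->
     Rabs (rsum p (fun j => if Nat.eq_dec j i then 0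
                             else if Req_EM_T (beta j) 0 then 0
                             else colip n X i j * beta j))
     <= b * norm2 p beta) /\
  (forall i, (i < p)%nat -> beta i = 0 ->
     Rabs (rsum p (fun j => if Req_EM_T (beta j) 0 then 0
                             else colip n X i j * beta j))
     <= b * norm2 p beta).

(* Shat (a list of indices) is a possible output of Algorithm 1 with input X, y, d
   (ties broken arbitrarily). *)
Definition alg1_output (n p : nat) (X : nat -> nat -> R) (y : nat -> R)
    (d : nat) (Shat : list nat) : Prop :=
  let w := tmatvec n X y in
  NoDup Shat /\ length Shat = d /\ (forall i, In i Shat -> (i < p)%nat) /\
  (forall i j, In i Shat -> (j < p)%nat -> ~ In j Shat -> Rabs (w j) <= Rabs (w i)).

Definition Rceil (r : R) : Z := (- (up (- r) - 1))%Z.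

(* Main.v *)
Require Import Defs.
From Stdlib Require Import Reals List ZArith Lra Lia.
Open Scope R_scope.

Lemma rsum_ext n f g : (forall i, (i < n)%nat -> f i = g i) -> rsum n f = rsum n g.
Proof. induction n; simpl; intros H; auto. rewrite IHn by (intros; apply H; lia). rewrite H by lia. auto. Qed.

Lemma rsum_plus n f g : rsum n (fun i => f i + g i) = rsum n f + rsum n g.
Proof. induction n; simpl; [lra|]. rewrite IHn. lra. Qed.

Lemma rsum_scal n c f : rsum n (fun i => c * f i) = c * rsum n f.
Proof. induction n; simpl; [lra|]. rewrite IHn. lra. Qed.

Lemma rsum_swap n p f : rsum n (fun i => rsum p (fun l => f i l)) = rsum p (fun l => rsum n (fun i => f i l)).
Proof.
  induction n; simpl.
  - induction p; simpl; [lra|]. rewrite <- IHp. lra.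
  - rewrite IHn. rewrite <- rsum_plus. auto.
Qed.

Lemma rsum_nonneg n f : (forall i, (i < n)%nat -> 0 <= f i) -> 0 <= rsum n f.
Proof. induction n; simpl; intros H; [lra|]. assert (0 <= f n) by (apply H; lia).
  assert (0 <= rsum n f) by (apply IHn; intros; apply H; lia). lra. Qed.

Lemma rsum_pick n f j : (j < n)%nat ->
  rsum n f = f j + rsum n (fun l => if Nat.eq_dec l j then 0 else f l).
Proof.
  induction n; intros Hj; [lia|]. simpl.
  destruct (Nat.eq_dec n j).
  - subst. rewrite (rsum_ext j (fun l => if Nat.eq_dec l j then 0 else f l) f).
    + lra.
    + intros. destruct (Nat.eq_dec i j); [lia|auto].
  - rewrite IHn by lia. lra.
Qed.

Lemma supp_bound p beta bmin : 0 <= bmin ->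
  (forall i, (i < p)%nat -> beta i <> 0 -> bmin <= Rabs (beta i)) ->
  INR (supp_card p beta) * bmin ^ 2 <= rsum p (fun j => beta j ^ 2).
Proof.
  intros H0; induction p; intros H; [simpl; lra|]. cbn [rsum supp_card].
  rewrite plus_INR.
  assert (IH : INR (supp_card p beta) * bmin ^ 2 <= rsum p (fun j => beta j ^ 2))
    by (apply IHp; intros; apply H; auto; lia).
  destruct (Req_EM_T (beta p) 0).
  - change (INR 0) with 0. assert (0 <= beta p ^ 2) by apply pow2_ge_0. lra.
  - assert (bmin <= Rabs (beta p)) by (apply H; auto).
    assert (beta p ^ 2 = Rabs (beta p) ^ 2).
    { unfold Rabs; destruct Rcase_abs; nra. }
    assert (bmin ^ 2 <= Rabs (beta p) ^ 2) by (apply pow_incr; lra).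
    change (INR 1) with 1. lra.
Qed.

Definition suppb (beta : nat -> R) (j : nat) : bool :=
  if Req_EM_T (beta j) 0 then false else true.

Lemma supp_len p beta : length (filter (suppb beta) (seq 0 p)) = supp_card p beta.
Proof.
  induction p; auto. rewrite seq_S, filter_app, length_app, IHp. simpl.
  unfold suppb. destruct (Req_EM_T (beta p) 0); simpl; lia.
Qed.

Lemma w_expand n p X beta eta j :
  tmatvec n X (fun i => matvec p X beta i + eta i) j =
  rsum p (fun l => colip n X j l * beta l) + tmatvec n X eta j.
Proof.
  unfold tmatvec, inner, matvec, colip, inner, col.
  rewrite (rsum_ext n (fun i => X i j * (rsum p (fun j0 => X i j0 * beta j0) + eta i))
     (fun i => rsum p (fun l => X i j * X i l * beta l) + X i j * eta i)).
  - rewrite rsum_plus. rewrite rsum_swap. f_equal.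
    apply rsum_ext. intros. rewrite Rmult_comm, <- rsum_scal. apply rsum_ext. intros. ring.
  - intros. rewrite Rmult_plus_distr_l, <- rsum_scal. f_equal. apply rsum_ext. intros. ring.
Qed.

Lemma Rceil_ge r : r <= IZR (Rceil r).
Proof.
  unfold Rceil. destruct (archimed (- r)). rewrite opp_IZR, minus_IZR. lra.
Qed.

Theorem theorem1 (n p k : nat) (X : nat -> nat -> R) (beta eta : nat -> R)
    (sigma b bmin : R) :
  (2 <= p)%nat -> (0 < k)%nat -> (k < n)%nat ->
  unit_columns n p X ->
  supp_card p beta = k ->
  is_beta_min p beta bmin ->
  screening_condition n p k X beta b ->
  bmin / norm2 p beta > 2 * b + 4 * sqrt (sigma ^ 2 * ln (INR p)) / norm2 p beta ->
  (* the event G_eta *)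
  (forall j, (j < p)%nat ->
     Rabs (tmatvec n X eta j) <= 2 * sqrt (sigma ^ 2 * ln (INR p))) ->
  forall (d : nat) (Shat : list nat),
    (1 <= d)%nat -> (d <= p)%nat ->
    (Rceil (sqrt (INR k) /
       (bmin / norm2 p beta - 2 * b - 4 * sqrt (sigma ^ 2 * ln (INR p)) / norm2 p beta))
       <= Z.of_nat d)%Z ->
    alg1_output n p X (fun i => matvec p X beta i + eta i) d Shat ->
    forall i, (i < p)%nat -> beta i <> 0 -> In i Shat.
Proof.
  intros Hp Hk Hkn Hunit Hsupp [[i0 [Hi0 [Hbi0 Habs0]]] Hmin] [Hb0 [Hb1 [SC1 SC2]]] Hgap Heta
    d Shat Hd1 Hdp Hceil [Hnd [Hlen [Hrange Htop]]] i Hi Hbi.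
  set (s := sqrt (sigma ^ 2 * ln (INR p))) in *.
  set (N := norm2 p beta) in *.
  assert (Hs : 0 <= s) by apply sqrt_pos.
  assert (Hbm : 0 < bmin) by (rewrite <- Habs0; apply Rabs_pos_lt; auto).
  assert (Hsum := supp_bound p beta bmin (Rlt_le _ _ Hbm) Hmin).
  rewrite Hsupp in Hsum.
  assert (HkR : 1 <= INR k) by (apply (le_INR 1); lia).
  assert (Hpos : 0 < rsum p (fun j => beta j ^ 2)) by nra.
  assert (HN : 0 < N) by (apply sqrt_lt_R0; auto).
  assert (HN2 : N * N = rsum p (fun j => beta j ^ 2)) by (apply sqrt_sqrt; lra).
  assert (Hsk : 0 < sqrt (INR k)) by (apply sqrt_lt_R0; lra).
  assert (Hsk2 : sqrt (INR k) * sqrt (INR k) = INR k) by (apply sqrt_sqrt; lra).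
  assert (HbmN : bmin * sqrt (INR k) <= N).
  { apply Rsqr_incr_0; unfold Rsqr; try nra. }
  set (delta := bmin / N - 2 * b - 4 * s / N) in *.
  assert (Hdpos : 0 < delta) by (unfold delta; lra).
  assert (Hdle : delta * sqrt (INR k) <= 1).
  { unfold delta. assert (bmin / N * sqrt (INR k) <= 1).
    { unfold Rdiv. rewrite Rmult_assoc, (Rmult_comm (/ N)), <- Rmult_assoc.
      apply (Rmult_le_reg_r N); auto. rewrite Rmult_assoc, Rinv_l by lra. lra. }
    assert (0 <= 4 * s / N) by (unfold Rdiv; apply Rmult_le_pos; [lra| left; apply Rinv_0_lt_compat; auto]).
    nra. }
  assert (Hkd : INR k <= INR d).
  { assert (H1 : INR k <= sqrt (INR k) / delta).
    { apply (Rmult_le_reg_r delta); auto. unfold Rdiv. rewrite Rmult_assoc, Rinv_l by lra. nra. }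
    assert (H2 := Rceil_ge (sqrt (INR k) / delta)).
    apply IZR_le in Hceil. rewrite <- INR_IZR_INZ in Hceil. lra. }
  apply INR_le in Hkd.
  assert (Hgap' : bmin > 2 * b * N + 4 * s).
  { assert (bmin = bmin / N * N) by (field; lra).
    assert (4 * s = 4 * s / N * N) by (field; lra).
    nra. }
  set (w := tmatvec n X (fun i => matvec p X beta i + eta i)) in *.
  assert (Hw : forall j, w j = rsum p (fun l => colip n X j l * beta l) + tmatvec n X eta j)
    by (intros; apply w_expand).
  assert (Hcdiag : forall j, (j < p)%nat -> colip n X j j = 1).
  { intros j Hj. specialize (Hunit j Hj). unfold norm2 in Hunit.
    assert (Hq : 0 <= rsum n (fun i1 => col X j i1 ^ 2)) by (apply rsum_nonneg; intros; nra).
    assert (Hr := sqrt_sqrt _ Hq). rewrite Hunit in Hr.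
    unfold colip, inner. rewrite Rmult_1_r in Hr. rewrite Hr. apply rsum_ext. intros. simpl. ring. }
  assert (Hin : forall j, (j < p)%nat -> beta j <> 0 -> bmin - b * N - 2 * s <= Rabs (w j)).
  { intros j Hj Hbj. rewrite Hw. rewrite (rsum_pick p _ j Hj), Hcdiag by auto.
    specialize (SC1 j Hj Hbj). specialize (Heta j Hj). specialize (Hmin j Hj Hbj).
    rewrite (rsum_ext p _ (fun j0 => if Nat.eq_dec j0 j then 0
                             else if Req_EM_T (beta j0) 0 then 0
                             else colip n X j j0 * beta j0)).
    2:{ intros l _. destruct (Nat.eq_dec l j); auto. destruct (Req_EM_T (beta l) 0); auto.
        rewrite e; ring. }
    fold N in SC1. revert SC1 Heta Hmin.
    unfold Rabs; repeat destruct Rcase_abs; intros; lra. }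
  assert (Hout : forall j, (j < p)%nat -> beta j = 0 -> Rabs (w j) <= b * N + 2 * s).
  { intros j Hj Hbj. rewrite Hw.
    specialize (SC2 j Hj Hbj). specialize (Heta j Hj).
    rewrite (rsum_ext p _ (fun j0 => if Req_EM_T (beta j0) 0 then 0
                             else colip n X j j0 * beta j0)).
    2:{ intros l _. destruct (Req_EM_T (beta l) 0); auto.
        rewrite e; ring. }
    fold N in SC2. revert SC2 Heta.
    unfold Rabs; repeat destruct Rcase_abs; intros; lra. }
  destruct (In_dec Nat.eq_dec i Shat) as [Hin_i|Hnin]; auto. exfalso.
  assert (Hall : forall m, In m Shat -> beta m <> 0).
  { intros m Hm Hbm0. assert (Hmp := Hrange m Hm).
    assert (H1 := Htop m i Hm Hi Hnin). fold w in H1.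
    assert (H2 := Hout m Hmp Hbm0). assert (H3 := Hin i Hi Hbi).
    assert (0 <= b * N) by nra. lra. }
  assert (Hincl : incl (i :: Shat) (filter (suppb beta) (seq 0 p))).
  { intros m Hm. apply filter_In. split.
    - apply in_seq. destruct Hm as [<-|Hm]; [lia|]. specialize (Hrange m Hm); lia.
    - unfold suppb. destruct (Req_EM_T (beta m) 0); auto.
      destruct Hm as [<-|Hm]; [contradiction|]. exfalso; apply (Hall m Hm); auto. }
  assert (Hlen2 := NoDup_incl_length (NoDup_cons i Hnin Hnd) Hincl).
  rewrite supp_len in Hlen2. simpl in Hlen2. lia.
Qed.
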